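(* Let $A_1,\dots,A_m\in\mathbb{C}^{d\times k}$ with $k\le d$ be such that the matrix $[A_i]_{i=1}^m$ (the $md\times k$ matrix obtained by stacking $A_1,\dots,A_m$) has rank $k$, and let $B$ be a $k\times k$ Hermitian positive semidefinite matrix. Then $\phi(X):=\log\det\bigl(B+\sum_{i=1}^m A_i^*XA_i\bigr)$ is geodesically convex on $\mathbb{P}_d$.
   Context: $\mathbb{P}_d$ denotes the set of $d\times d$ Hermitian positive definite matrices. For $A,B\in\mathbb{P}_d$ and $t\in[0,1]$, $A\#_tB:=A^{1/2}(A^{-1/2}BA^{-1/2})^tA^{1/2}$. A function $\phi$ on $\mathbb{P}_d$ is geodesically convex if $\phi(A\#_tB)\le(1-t)\phi(A)+t\phi(B)$ for all $A,B\in\mathbb{P}_d$, $t\in[0,1]$. *)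

(* Defs.v *)
From HB Require Import structures.
From mathcomp Require Import all_boot all_order all_algebra.
From mathcomp Require Import sesquilinear spectral.
From mathcomp Require Import complex.
From mathcomp Require Import all_classical all_reals.
From mathcomp Require Import exp.
Set Implicit Arguments. Unset Strict Implicit. Unset Printing Implicit Defensive.
Import Order.TTheory GRing.Theory Num.Theory.
Local Open Scope ring_scope.
Local Open Scope sesquilinear_scope.

Definition psdmx (R : realType) (n : nat) (A : 'M[R[i]]_n) : Prop :=
  A \is hermsymmx /\ forall x : 'cV[R[i]]_n, 0 <= (x ^t* *m A *m x) 0 0.

Definition pdmx (R : realType) (n : nat) (A : 'M[R[i]]_n) : Prop :=
  A \is hermsymmx /\
  forall x : 'cV[R[i]]_n, x != 0 -> 0 < (x ^t* *m A *m x) 0 0.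

Definition mxpowr (R : realType) (n : nat) (A : 'M[R[i]]_n) (t : R)
  : 'M[R[i]]_n :=
  invmx (spectralmx A) *m
  diag_mx (\row_j ((complex.Re (spectral_diag A 0 j)) `^ t)%:C%C) *m
  spectralmx A.

(* Weighted geometric mean  A #_t B := A^{1/2} (A^{-1/2} B A^{-1/2})^t A^{1/2}. *)
Definition geomean (R : realType) (n : nat) (A B : 'M[R[i]]_n) (t : R)
  : 'M[R[i]]_n :=
  let Ah := mxpowr A (2^-1) in
  let Aih := mxpowr A (- 2^-1) in
  Ah *m mxpowr (Aih *m B *m Aih) t *m Ah.

Definition geodesically_convex (R : realType) (d : nat)
  (phi : 'M[R[i]]_d -> R) : Prop :=
  forall (A B : 'M[R[i]]_d) (t : R), pdmx A -> pdmx B -> 0 <= t <= 1 ->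
    phi (geomean A B t) <= (1 - t) * phi A + t * phi B.

(* log det of a matrix whose determinant is a positive real number. *)
Definition logdet (R : realType) (n : nat) (M : 'M[R[i]]_n) : R :=
  ln (complex.Re (\det M)).

(* Main.v *)
Require Import Defs.
From HB Require Import structures.
From mathcomp Require Import all_boot all_order all_algebra.
From mathcomp Require Import sesquilinear spectral.
From mathcomp Require Import complex.
From mathcomp Require Import all_classical all_reals.
From mathcomp Require Import exp.
From mathcomp Require Import fingroup perm.
Set Implicit Arguments. Unset Strict Implicit. Unset Printing Implicit Defensive.
Import Order.TTheory GRing.Theory Num.Theory.
Local Open Scope ring_scope.
Local Open Scope sesquilinear_scope.

Section Gram.
Variable C : numClosedFieldType.

Lemma gram_det (I : finType) k (b : I -> C) (h : I -> 'I_k -> C) :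
  k`!%:R * \det (\matrix_(r, c) \sum_l b l * (h l r * (h l c)^*)) =
  \sum_(f : {ffun 'I_k -> I}) (\prod_r b (f r)) *
     (\det (\matrix_(r, c) h (f r) c) * (\det (\matrix_(r, c) h (f r) c))^*).
Proof.
set G := fun f : {ffun 'I_k -> I} => \matrix_(r, c) h (f r) c.
have E1 : \det (\matrix_(r, c) \sum_l b l * (h l r * (h l c)^*)) =
   \sum_(f : {ffun 'I_k -> I}) (\prod_r (b (f r) * h (f r) r)) * (\det (G f))^*.
  rewrite /determinant.
  transitivity (\sum_(s : 'S_k) \sum_(f : {ffun 'I_k -> I}) (-1) ^+ s *
     \prod_r (b (f r) * (h (f r) r * (h (f r) (s r))^*))).
    apply: eq_bigr => s _.
    rewrite (eq_bigr (fun r => \sum_l b l * (h l r * (h l (s r))^*))); last first.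
      by move=> r _; rewrite mxE.
    by rewrite bigA_distr_bigA /= big_distrr.
  rewrite /= exchange_big /=; apply: eq_bigr => f _.
  rewrite rmorph_sum big_distrr /=; apply: eq_bigr => s _.
  rewrite rmorphM rmorph_sign rmorph_prod mulrCA; congr (_ * _).
  rewrite -big_split /=; apply: eq_bigr => r _; rewrite !mxE mulrA.
  done.
have E2 : forall s : 'S_k, \det (\matrix_(r, c) \sum_l b l * (h l r * (h l c)^*)) =
   \sum_(f : {ffun 'I_k -> I}) (-1) ^+ s * (\prod_r (b (f (s r)) * h (f (s r)) r)) * (\det (G f))^*.
  move=> s; rewrite E1.
  rewrite (reindex_inj (h := fun f : {ffun 'I_k -> I} => [ffun r => f (s r)])) /=; last first.
    move=> f g /ffunP efg; apply/ffunP => r.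
    have := efg (s^-1 r)%g; rewrite !ffunE permKV //.
  apply: eq_bigr => f _.
  have -> : G [ffun r => f (s r)] = row_perm s (G f).
    by apply/matrixP => i j; rewrite !mxE ffunE.
  rewrite row_permE det_mulmx det_perm rmorphM rmorph_sign.
  rewrite mulrCA mulrA; congr (_ * _ * _).
  by apply: eq_bigr => r _; rewrite ffunE.
have -> : (k`!%:R : C) = \sum_(s : 'S_k) 1 by rewrite sumr_const card_Sn.
rewrite big_distrl /=.
under eq_bigr => s _ do rewrite mul1r (E2 s).
rewrite exchange_big /=; apply: eq_bigr => f _.
rewrite -big_distrl /= mulrA; congr (_ * _).
have Pb : forall s : 'S_k, \prod_r (b (f (s r)) * h (f (s r)) r) =
    (\prod_r b (f r)) * \prod_r G f (s r) r.
  move=> s; rewrite big_split /=; congr (_ * _).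
    by rewrite [RHS](reindex_inj (@perm_inj _ s)).
  by apply: eq_bigr => r _; rewrite mxE.
under eq_bigr => s _ do rewrite Pb mulrCA.
rewrite -big_distrr /=; congr (_ * _).
rewrite -det_tr /determinant; apply: eq_bigr => s _.
by congr (_ * _); apply: eq_bigr => r _; rewrite !mxE.
Qed.

End Gram.
Lemma conj_sandwich (F : comUnitRingType) n (U D1 D2 : 'M[F]_n) : U \in unitmx ->
  invmx U *m D1 *m U *m (invmx U *m D2 *m U) = invmx U *m (D1 *m D2) *m U.
Proof.
move=> Uu.
rewrite -[invmx U *m D1 *m U *m _]mulmxA [U *m (_ *m U)]mulmxA [U *m (_ *m D2)]mulmxA.
by rewrite mulmxV // mul1mx !mulmxA.
Qed.

Section Hold.
Variable R : realType.

Lemma young_base (a b t : R) : 0 <= a -> 0 <= b -> 0 < t < 1 ->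
  a `^ (1 - t) * b `^ t <= (1 - t) * a + t * b.
Proof.
move=> a0 b0 /andP[t0 t1].
have t1' : 0 < 1 - t by rewrite subr_gt0.
have := @conjugate_powR R (a `^ (1 - t)) (b `^ t) (1 - t)^-1 t^-1
  (powR_ge0 _ _) (powR_ge0 _ _) (eqbRL (invr_gt0 _) t1') (eqbRL (invr_gt0 _) t0).
rewrite !invrK -!powRrM !divff ?gt_eqF // !powRr1 // subrK => /(_ erefl).
by rewrite [_ * (1 - t)]mulrC [b * t]mulrC.
Qed.

Lemma young_scaled (u v P Q t : R) : 0 <= u -> 0 <= v -> 0 < P -> 0 < Q -> 0 < t < 1 ->
  u `^ (1 - t) * v `^ t <=
  P `^ (1 - t) * Q `^ t * ((1 - t) * (u / P) + t * (v / Q)).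
Proof.
move=> u0 v0 P0 Q0 tt.
have -> : u = P * (u / P) by rewrite mulrC divfK ?gt_eqF.
have -> : v = Q * (v / Q) by rewrite mulrC divfK ?gt_eqF.
rewrite [P * _ / P]mulrC [Q * _ / Q]mulrC !mulKf ?gt_eqF // (powRM _ (ltW P0) (divr_ge0 u0 (ltW P0))) (powRM _ (ltW Q0) (divr_ge0 v0 (ltW Q0))).
rewrite mulrACA; apply: ler_wpM2l; first by rewrite mulr_ge0 ?powR_ge0.
by apply: young_base => //; apply: divr_ge0 => //; exact: ltW.
Qed.


Lemma holder_ln (I : finType) (a y : I -> R) t :
  (forall i, 0 <= a i) -> (forall i, 0 < y i) -> 0 <= t <= 1 ->
  ln (\sum_i a i * y i `^ t) <=
  (1 - t) * ln (\sum_i a i * y i `^ 0) + t * ln (\sum_i a i * y i `^ 1).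
Proof.
move=> a0 y0 /andP[t0 t1].
have [->|tn0] := eqVneq t 0; first by rewrite subr0 mul1r mul0r addr0.
have [->|tn1] := eqVneq t 1; first by rewrite subrr mul0r add0r mul1r.
have tt : 0 < t < 1 by rewrite !lt_neqAle t0 t1 eq_sym tn0 tn1.
set P := \sum_i a i; set Q := \sum_i a i * y i.
have -> : \sum_i a i * y i `^ 0 = P by apply: eq_bigr => i _; rewrite powRr0 mulr1.
have -> : \sum_i a i * y i `^ 1 = Q by apply: eq_bigr => i _; rewrite powRr1 ?(ltW (y0 _)).
have P0 : 0 <= P by apply: sumr_ge0.
have [Pz|Pn0] := eqVneq P 0.
  have az : forall i, a i = 0.
    by move=> i; move/psumr_eq0P: Pz => /(_ (fun i _ => a0 i) i isT).
  rewrite /Q !big1 ?Pz ?ln0 // ?mulr0 ?addr0 // => i _; by rewrite az mul0r.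
have Ppos : 0 < P by rewrite lt_neqAle eq_sym Pn0 P0.
have ay0 : forall i, 0 <= a i * y i by move=> i; apply: mulr_ge0 => //; apply: ltW.
have Qpos : 0 < Q.
  rewrite lt_neqAle sumr_ge0 // andbT eq_sym; apply/eqP => Qz; move/eqP: Pn0; apply.
  apply: big1 => i _; have := @psumr_eq0P _ _ xpredT _ (fun i _ => ay0 i) Qz i isT.
  by move/eqP; rewrite mulf_eq0 (gt_eqF (y0 i)) orbF => /eqP.
have gpos : 0 < \sum_i a i * y i `^ t.
  rewrite lt_neqAle sumr_ge0 ?andbT; last by move=> i _; rewrite mulr_ge0 ?powR_ge0.
  rewrite eq_sym; apply/eqP => gz; move/eqP: Pn0; apply.
  apply: big1 => i _.
  have := @psumr_eq0P _ _ xpredT _ (fun i _ => mulr_ge0 (a0 i) (powR_ge0 (y i) t)) gz i isT.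
  by move/eqP; rewrite mulf_eq0 (gt_eqF (powR_gt0 _ (y0 i))) orbF => /eqP.
have key : \sum_i a i * y i `^ t <= P `^ (1 - t) * Q `^ t.
  have E : forall i, a i * y i `^ t = a i `^ (1 - t) * (a i * y i) `^ t.
    move=> i; rewrite powRM ?(ltW (y0 i)) // mulrA -powRD; last first.
      by rewrite subrK oner_eq0.
    by rewrite subrK powRr1.
  under eq_bigr do rewrite E.
  apply: le_trans (ler_sum _ (fun i _ => young_scaled (a0 i) (ay0 i) Ppos Qpos tt)) _.
  rewrite -big_distrr /= big_split /= -!big_distrr /= -!mulr_suml.
  by rewrite -/P -/Q !divff ?gt_eqF // !mulr1 subrK mulr1.
rewrite -ln_powR -[t * ln Q]ln_powR -lnM ?posrE ?powR_gt0 //.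
by rewrite ler_ln ?posrE // mulr_gt0 ?powR_gt0.
Qed.

End Hold.
Section Mx.
Variable R : realType.
Local Notation C := (R[i]).
Local Notation rC := (real_complex R).

Lemma herm_ct n (A : 'M[C]_n) : A \is hermsymmx -> A^t* = A.
Proof. by move/is_hermitianmxP => {2}->; rewrite expr0 scale1r. Qed.

Lemma ct_herm n (A : 'M[C]_n) : A^t* = A -> A \is hermsymmx.
Proof. by move=> h; apply/is_hermitianmxP; rewrite expr0 scale1r h. Qed.

Lemma ct_mul m n p (M : 'M[C]_(m, n)) (N : 'M[C]_(n, p)) :
  (M *m N)^t* = N^t* *m M^t*.
Proof. by rewrite trmx_mul map_mxM. Qed.

Lemma realC_conj (x : R) : (rC x)^* = rC x :> C.
Proof.
apply: conj_Creal; rewrite realE !lecE /= eqxx /=.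
by case: (lerP 0 x) => // /ltW ->; rewrite orbT.
Qed.

Lemma Cpos (z : C) : 0 < z -> z = rC (complex.Re z) /\ 0 < complex.Re z.
Proof. by case: z => a b; rewrite ltcE /= => /andP[/eqP -> h]. Qed.

Lemma Cnneg (z : C) : 0 <= z -> z = rC (complex.Re z) /\ 0 <= complex.Re z.
Proof. by case: z => a b; rewrite lecE /= => /andP[/eqP -> h]. Qed.

Lemma delta_ct n (j : 'I_n) : (delta_mx j (0 : 'I_1) : 'cV[C]_n)^t* = delta_mx 0 j.
Proof.
apply/matrixP => i l; rewrite !mxE.
by case: (_ == _); case: (_ == _); rewrite /= ?conjC1 ?conjC0.
Qed.

Lemma eig_form n (A : 'M[C]_n) (j : 'I_n) : A \is hermsymmx ->
  let x := (spectralmx A)^t* *m delta_mx j (0 : 'I_1) in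
  (x^t* *m A *m x) 0 0 = spectral_diag A 0 j /\ x != 0.
Proof.
move=> hA x.
have PU := spectral_unitarymx A.
have PP : spectralmx A *m (spectralmx A)^t* = 1%:M by apply/unitarymxP.
have EA := orthomx_spectralP (hermitian_normalmx hA).
rewrite invmx_unitary // in EA.
rewrite /x.
set P := spectralmx A in PU PP EA *.
set s := spectral_diag A in EA *.
split.
  rewrite ct_mul trmxCK delta_ct EA !mulmxA -(mulmxA _ P) PP mulmx1.
  rewrite -(mulmxA _ P) PP mulmx1 -rowE -colE !mxE.
  by rewrite eqxx mulr1n.
apply/eqP => x0.
have : P *m (P^t* *m delta_mx j (0 : 'I_1)) = 0 by rewrite x0 mulmx0.
rewrite mulmxA PP mul1mx => /matrixP /(_ j 0); rewrite !mxE !eqxx /=.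
by move/eqP; rewrite oner_eq0.
Qed.


Definition ud n (U : 'M[C]_n) (v : 'I_n -> R) (t : R) : 'M[C]_n :=
  invmx U *m diag_mx (\row_j rC (v j `^ t)) *m U.

Lemma mxpowr_ud n (A : 'M[C]_n) t :
  mxpowr A t = ud (spectralmx A) (fun j => complex.Re (spectral_diag A 0 j)) t.
Proof. by []. Qed.

Lemma ud_mul n (U : 'M[C]_n) v s t : U \is unitarymx -> (forall j, 0 < v j) ->
  ud U v s *m ud U v t = ud U v (s + t).
Proof.
move=> Uu v0; have Uunit := unitarymx_unit Uu.
rewrite /ud (conj_sandwich _ _ Uunit) mulmx_diag.
have -> : \row_j ((\row_j rC (v j `^ s)) 0 j * (\row_j rC (v j `^ t)) 0 j) =
          \row_j rC (v j `^ (s + t)).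
  apply/rowP => j; rewrite !mxE -rmorphM powRD //.
  by apply/implyP => _; rewrite gt_eqF.
by [].
Qed.

Lemma ud0 n (U : 'M[C]_n) v : U \is unitarymx -> ud U v 0 = 1%:M.
Proof.
move=> Uu; have Uunit := unitarymx_unit Uu.
rewrite /ud (_ : diag_mx _ = 1%:M) ?mulmx1 ?mulVmx //.
apply/matrixP => i j; rewrite !mxE powRr0.
by case: (i == j).
Qed.

Lemma diag_ct n (e : 'rV[C]_n) : (forall j, (e 0 j)^* = e 0 j) ->
  (diag_mx e)^t* = diag_mx e.
Proof.
move=> he; rewrite tr_diag_mx map_diag_mx; congr diag_mx.
by apply/rowP => j; rewrite !mxE; exact: he.
Qed.

Lemma ud_ct n (U : 'M[C]_n) v t : U \is unitarymx -> (ud U v t)^t* = ud U v t.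
Proof.
move=> Uu; rewrite /ud !ct_mul invmx_unitary // trmxCK mulmxA diag_ct //.
by move=> j; rewrite mxE; exact: realC_conj.
Qed.

Lemma hermsym_ud1 n (A : 'M[C]_n) : A \is hermsymmx ->
  (forall j, 0 <= complex.Re (spectral_diag A 0 j)) ->
  (forall j, spectral_diag A 0 j = rC (complex.Re (spectral_diag A 0 j))) ->
  A = ud (spectralmx A) (fun j => complex.Re (spectral_diag A 0 j)) 1.
Proof.
move=> hA ge0 E.
have -> : ud (spectralmx A) (fun j => complex.Re (spectral_diag A 0 j)) 1 =
   invmx (spectralmx A) *m diag_mx (spectral_diag A) *m spectralmx A.
  rewrite /ud; have -> : \row_j rC (complex.Re (spectral_diag A 0 j) `^ 1) =
     spectral_diag A.
    apply/rowP => j; rewrite !mxE powRr1 //.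
  by [].
exact/orthomx_spectralP/hermitian_normalmx.
Qed.

Lemma pd_eig n (A : 'M[C]_n) : pdmx A -> forall j,
  spectral_diag A 0 j = rC (complex.Re (spectral_diag A 0 j)) /\
  0 < complex.Re (spectral_diag A 0 j).
Proof.
move=> [hA pA] j; have [E nz] := eig_form j hA.
by apply: Cpos; rewrite -E; apply: pA.
Qed.

Lemma psd_eig n (A : 'M[C]_n) : psdmx A -> forall j,
  spectral_diag A 0 j = rC (complex.Re (spectral_diag A 0 j)) /\
  0 <= complex.Re (spectral_diag A 0 j).
Proof.
move=> [hA pA] j; have [E nz] := eig_form j hA.
by apply: Cnneg; rewrite -E; apply: pA.
Qed.

Lemma entry_VDV p n (V : 'M[C]_(p, n)) (d : 'I_n -> C) r c :
  (V *m diag_mx (\row_j d j) *m V^t*) r c = \sum_j d j * (V r j * (V c j)^*).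
Proof.
rewrite mul_mx_diag !mxE; apply: eq_bigr => j _; rewrite !mxE.
by rewrite [V r j * d j]mulrC -mulrA.
Qed.


Lemma prod_powR (I : finType) (x : I -> R) t : (forall i, 0 <= x i) ->
  \prod_i x i `^ t = (\prod_i x i) `^ t.
Proof.
move=> x0; elim: (index_enum I) => [|i s IH]; first by rewrite !big_nil powR1.
rewrite !big_cons IH powRM //; exact: prodr_ge0.
Qed.


Lemma GW_lem n (S Q : 'M[C]_n) v t : Q \is unitarymx -> S^t* = S ->
  S *m ud Q v t *m S =
  (S *m Q^t*) *m diag_mx (\row_j rC (v j `^ t)) *m (S *m Q^t*)^t*.
Proof.
move=> Qu Sct; rewrite /ud invmx_unitary // ct_mul trmxCK Sct.
by rewrite !mulmxA.
Qed.

Lemma sandwich n (S Si Y : 'M[C]_n) : S *m Si = 1%:M -> Si *m S = 1%:M ->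
  S *m (Si *m Y *m Si) *m S = Y.
Proof.
move=> h1 h2; rewrite !mulmxA h1 mul1mx -mulmxA h2 mulmx1 //.
Qed.

Lemma pd_congr n (S Si Y : 'M[C]_n) : pdmx Y -> Si^t* = Si -> S *m Si = 1%:M ->
  pdmx (Si *m Y *m Si).
Proof.
move=> [hY pY] Sict SSi; split.
  by apply: ct_herm; rewrite !ct_mul Sict (herm_ct hY) mulmxA.
move=> x xn0.
have -> : x^t* *m (Si *m Y *m Si) *m x = (Si *m x)^t* *m Y *m (Si *m x).
  by rewrite ct_mul Sict !mulmxA.
apply: pY; apply/eqP => Sx0; move/eqP: xn0; apply.
by rewrite -[x]mul1mx -SSi -mulmxA Sx0 mulmx0.
Qed.

Section Rep.
Variables (k m d : nat) (A : 'I_m -> 'M[C]_(d, k)) (PB : 'M[C]_k) (W : 'M[C]_d)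
  (sg : 'I_k -> R) (cc : 'I_d -> R).
Local Notation I := ('I_k + 'I_m * 'I_d)%type.
Definition alF (l : I) : R := match l with inl j => sg j | inr _ => 1 end.
Definition xxF (l : I) : R := match l with inl _ => 1 | inr p => cc p.2 end.
Definition hF (l : I) : 'I_k -> C :=
  match l with inl j => fun r => (PB^t*) r j
             | inr p => fun r => ((A p.1)^t* *m W) r p.2 end.
Definition bF s (l : I) : C := rC (alF l * xxF l `^ s).

Lemma Fmat_lem (B : 'M[C]_k) s :
  B = PB^t* *m diag_mx (\row_j rC (sg j)) *m (PB^t*)^t* ->
  B + \sum_i (A i)^t* *m (W *m diag_mx (\row_j rC (cc j `^ s)) *m W^t*) *m A i =
  \matrix_(r, q) \sum_l bF s l * (hF l r * (hF l q)^*).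
Proof.
move=> BE; apply/matrixP => r q; rewrite !mxE big_sumType /= summxE.
congr (_ + _).
  rewrite {1}BE entry_VDV; apply: eq_bigr => j _.
  by rewrite /bF /= powR1 mulr1.
rewrite (eq_bigr (fun i => \sum_j bF s (inr (i, j)) *
   (((A i)^t* *m W) r j * (((A i)^t* *m W) q j)^*))); last first.
  move=> i _.
  rewrite (_ : _ *m _ *m A i = ((A i)^t* *m W) *m diag_mx (\row_j rC (cc j `^ s))
     *m ((A i)^t* *m W)^t*); last by rewrite ct_mul trmxCK !mulmxA.
  rewrite entry_VDV; apply: eq_bigr => j _.
  by rewrite /bF /= mul1r.
by rewrite pair_bigA.
Qed.

Definition nF (f : {ffun 'I_k -> I}) : R :=
  complex.Re (`|\det (\matrix_(r, q) hF (f r) q)| ^+ 2).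
Definition aF (f : {ffun 'I_k -> I}) : R :=
  (k`!%:R)^-1 * ((\prod_r alF (f r)) * nF f).
Definition yF (f : {ffun 'I_k -> I}) : R := \prod_r xxF (f r).

Lemma nF_E (f : {ffun 'I_k -> I}) : `|\det (\matrix_(r, q) hF (f r) q)| ^+ 2 = rC (nF f) /\ 0 <= nF f.
Proof. by apply: Cnneg; rewrite exprn_ge0. Qed.

Lemma aF_ge0 (f : {ffun 'I_k -> I}) : (forall j, 0 <= sg j) -> 0 <= aF f.
Proof.
move=> sg0; rewrite /aF mulr_ge0 ?invr_ge0 ?ler0n // mulr_ge0 ?(nF_E f).2 //.
by apply: prodr_ge0 => r _; case: (f r) => //= j; apply: sg0.
Qed.

Lemma yF_gt0 (f : {ffun 'I_k -> I}) : (forall j, 0 < cc j) -> 0 < yF f.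
Proof.
by move=> cc0; apply: prodr_gt0 => r _; case: (f r) => //= p; apply: cc0.
Qed.

Lemma det_rep s : (forall j, 0 <= sg j) -> (forall j, 0 < cc j) ->
  complex.Re (\det (\matrix_(r, q) \sum_l bF s l * (hF l r * (hF l q)^*))) =
  \sum_f aF f * yF f `^ s.
Proof.
move=> sg0 cc0.
suff -> : \det (\matrix_(r, q) \sum_l bF s l * (hF l r * (hF l q)^*)) =
   rC (\sum_f aF f * yF f `^ s) by [].
have kf0 : (k`!%:R : R) != 0 by rewrite pnatr_eq0 -lt0n fact_gt0.
apply: (@mulfI _ (rC k`!%:R)).
  by rewrite -(rmorph0 (real_complex R)) (inj_eq (@complexI R)).
rewrite -rmorphM rmorph_nat gram_det big_distrr rmorph_sum /=.
apply: eq_bigr => f _.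
rewrite -normCK (nF_E f).1 /bF -rmorph_prod big_split /= prod_powR; last first.
  by move=> r; case: (f r) => //= p; apply: ltW; apply: cc0.
rewrite -[LHS](rmorphM (real_complex R)); congr rC.
rewrite /aF /yF !mulrA mulfV // mul1r.
by rewrite mulrAC.
Qed.

End Rep.
End Mx.
Local Notation rC := (real_complex _).


Theorem corollary8 (R : realType) (d k m : nat)
  (A : 'I_m -> 'M[R[i]]_(d, k)) (B : 'M[R[i]]_k) :
  (k <= d)%N ->
  \rank (\mxcol_(i < m) A i) = k ->
  psdmx B ->
  geodesically_convex
    (fun X : 'M[R[i]]_d => logdet (B + \sum_(i < m) (A i)^t* *m X *m A i)).
Proof.
move=> _ _ psdB X Y t pX pY t01 /=.
pose PX := spectralmx X.
pose rho := fun j => complex.Re (spectral_diag X 0 j).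
have PXu : PX \is unitarymx := spectral_unitarymx X.
have rho0 : forall j, 0 < rho j := fun j => (pd_eig pX j).2.
pose S := ud PX rho (2^-1).
pose Si := ud PX rho (- 2^-1).
have h2 : (2^-1 + 2^-1 : R) = 1 by rewrite [RHS](splitr 1) mul1r.
have SSi : S *m Si = 1%:M by rewrite ud_mul // addrN ud0.
have SiS : Si *m S = 1%:M by rewrite ud_mul // addNr ud0.
have SS : S *m S = X.
  rewrite ud_mul // h2 [RHS](hermsym_ud1 pX.1) //.
    by move=> j; apply: ltW; apply: rho0.
  by move=> j; apply: (pd_eig pX j).1.
have Sct : S^t* = S by apply: ud_ct.
have Sict : Si^t* = Si by apply: ud_ct.
pose Cm := Si *m Y *m Si.
have pC : pdmx Cm := pd_congr pY Sict SSi.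
pose Q := spectralmx Cm.
pose cc := fun j => complex.Re (spectral_diag Cm 0 j).
have Qu : Q \is unitarymx := spectral_unitarymx Cm.
have cc0 : forall j, 0 < cc j := fun j => (pd_eig pC j).2.
have Cm1 : Cm = ud Q cc 1.
  apply: (hermsym_ud1 pC.1).
    by move=> j; apply: ltW; apply: cc0.
  by move=> j; apply: (pd_eig pC j).1.
pose G := fun t => S *m ud Q cc t *m S.
have Gt : geomean X Y t = G t by [].
have G0 : G 0 = X by rewrite /G ud0 // mulmx1 SS.
have G1 : G 1 = Y by rewrite /G -Cm1 sandwich.
pose W := S *m Q^t*.
have GW : forall t, G t = W *m diag_mx (\row_j rC (cc j `^ t)) *m W^t*.
  by move=> s; apply: GW_lem.
pose PB := spectralmx B.
pose sg := fun j => complex.Re (spectral_diag B 0 j).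
have PBu : PB \is unitarymx := spectral_unitarymx B.
have sg0 : forall j, 0 <= sg j := fun j => (psd_eig psdB j).2.
have BE : B = PB^t* *m diag_mx (\row_j rC (sg j)) *m (PB^t*)^t*.
  rewrite trmxCK -invmx_unitary //.
  have -> : \row_j rC (sg j) = spectral_diag B.
    by apply/rowP => j; rewrite !mxE -(psd_eig psdB j).1.
  exact/orthomx_spectralP/hermitian_normalmx/psdB.1.
have key : forall s, logdet (B + \sum_i (A i)^t* *m G s *m A i) =
    ln (\sum_f aF A PB W sg f * yF (m:=m) cc f `^ s).
  move=> s; rewrite /logdet GW (@Fmat_lem R k m d A PB W sg cc B s BE) det_rep //.
have H := @holder_ln R _ (aF A PB W sg) (yF (m:=m) cc) t
  (fun f => aF_ge0 _ _ _ f sg0) (fun f => yF_gt0 f cc0) t01.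
rewrite -!key G0 G1 in H.
by rewrite Gt.
Qed.
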